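(* Let $X,Y$ be Banach spaces. Then every element of $\mathrm{INA}_\pi(X\widehat{\otimes}_\pi Y)$ is a norm limit of elements of $\mathrm{FNA}_\pi(X\widehat{\otimes}_\pi Y)$; that is, $\mathrm{INA}_\pi(X\widehat{\otimes}_\pi Y)\subseteq\overline{\mathrm{FNA}_\pi(X\widehat{\otimes}_\pi Y)}^{\|\cdot\|_\pi}$.
   Context: Definition: $u\in X\widehat{\otimes}_\pi Y$ is an integral projective norm-attaining tensor, written $u\in\mathrm{INA}_\pi(X\widehat{\otimes}_\pi Y)$, if there is a finite positive Borel measure $\mu$ on $B_X\times B_Y$ (norm topology) such that $\varphi:B_X\times B_Y\to X\widehat{\otimes}_\pi Y$, $\varphi(x,y)=x\otimes y$, is $\mu$-Bochner integrable, $u=\int_{B_X\times B_Y}x\otimes y\,d\mu(x,y)$ (Bochner integral) and $\|\mu\|=\|u\|_\pi$; then $u$ is said to be witnessed by $\mu$. $\mathrm{FNA}_\pi(X\widehat{\otimes}_\pi Y)$ is the set of finitely norm-attaining tensors: those $u$ admitting a finite representation $u=\sum_{k=1}^n x_k\otimes y_k$ with $\sum_{k=1}^n\|x_k\|\|y_k\|=\|u\|_\pi$. *)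

(* Defs.v *)
From HB Require Import structures.
From mathcomp Require Import all_boot all_order all_algebra.
From mathcomp Require Import all_classical all_reals all_analysis.
Set Implicit Arguments. Unset Strict Implicit. Unset Printing Implicit Defensive.
Import Order.TTheory GRing.Theory Num.Theory.
Import numFieldNormedType.Exports.
Local Open Scope classical_set_scope.
Local Open Scope ring_scope.

Section Defs.
Variable R : realType.

Definition bilinear_map (X Y W : lmodType R) (B : X -> Y -> W) : Prop :=
  (forall (a : R) x1 x2 y, B (a *: x1 + x2) y = a *: B x1 y + B x2 y) /\
  (forall (a : R) x y1 y2, B x (a *: y1 + y2) = a *: B x y1 + B x y2).

(* (Z, tp) is the (completed) projective tensor product of X and Y:
   it is characterised up to isometric isomorphism by
   - tp bilinear with ||x (x) y|| <= ||x|| ||y||,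
   - the linear span of elementary tensors is dense in Z,
   - universal property: every bounded bilinear map B into a Banach space W
     factors through a bounded linear map T with ||T|| <= ||B||. *)
Definition is_projective_tensor_product (X Y Z : completeNormedModType R)
    (tp : X -> Y -> Z) : Prop :=
  [/\ bilinear_map tp,
      (forall x y, `|tp x y| <= `|x| * `|y|),
      (forall (z : Z) (e : R), 0 < e -> exists (n : nat) (x : nat -> X) (y : nat -> Y),
          `|z - \sum_(k < n) tp (x k) (y k)| < e) &
      (forall (W : completeNormedModType R) (B : X -> Y -> W) (C : R),
          bilinear_map B -> (forall x y, `|B x y| <= C * (`|x| * `|y|)) ->
          exists T : Z -> W,
            [/\ (forall (a : R) z1 z2, T (a *: z1 + z2) = a *: T z1 + T z2),
                (forall x y, T (tp x y) = B x y) &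
                (forall z, `|T z| <= C * `|z|)])].

Definition FNA (X Y Z : completeNormedModType R) (tp : X -> Y -> Z) : set Z :=
  [set u | exists (n : nat) (x : nat -> X) (y : nat -> Y),
      u = \sum_(k < n) tp (x k) (y k) /\
      \sum_(k < n) `|x k| * `|y k| = `|u| ].

Definition borelXY (X Y : completeNormedModType R) :=
  g_sigma_algebraType (@open (X * Y)%type).

Definition simple_eval {d} {T : measurableType d} {Z : normedModType R}
    (N : nat) (A : nat -> set T) (z : nat -> Z) (t : T) : Z :=
  \sum_(k < N) (\1_(A k) t : R) *: z k.

Definition simple_int {d} {T : measurableType d} {Z : normedModType R}
    (mu : {measure set T -> \bar R}) (N : nat) (A : nat -> set T) (z : nat -> Z) : Z :=
  \sum_(k < N) fine (mu (A k)) *: z k.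

Definition strongly_measurable {d} {T : measurableType d} {Z : normedModType R}
    (mu : {measure set T -> \bar R}) (f : T -> Z) : Prop :=
  exists (N : nat -> nat) (A : nat -> nat -> set T) (z : nat -> nat -> Z),
    (forall n k, measurable (A n k)) /\
    {ae mu, forall t, (fun n => simple_eval (N n) (A n) (z n) t) @ \oo --> f t}.

Definition bochner_integral {d} {T : measurableType d} {Z : normedModType R}
    (mu : {measure set T -> \bar R}) (f : T -> Z) (u : Z) : Prop :=
  strongly_measurable mu f /\
  exists (N : nat -> nat) (A : nat -> nat -> set T) (z : nat -> nat -> Z),
    [/\ (forall n k, measurable (A n k)),
        (fun n => (\int[mu]_t (`|f t - simple_eval (N n) (A n) (z n) t|)%:E)%E)
           @ \oo --> 0%E &
        (fun n => simple_int mu (N n) (A n) (z n)) @ \oo --> u].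

Definition INA (X Y Z : completeNormedModType R) (tp : X -> Y -> Z) : set Z :=
  [set u | exists mu : {measure set (borelXY X Y) -> \bar R},
      [/\ (mu setT < +oo)%E,
          mu (~` [set t : borelXY X Y | `|t.1| <= 1 /\ `|t.2| <= 1]) = 0%E,
          bochner_integral mu (fun t : borelXY X Y => tp t.1 t.2) u &
          mu setT = (`|u|)%:E] ].

End Defs.

(* Main.v *)
Require Import Defs.
From HB Require Import structures.
From mathcomp Require Import all_boot all_order all_algebra.
From mathcomp Require Import all_classical all_reals all_analysis.
From mathcomp Require Import lra.
From mathcomp Require Import measurable_realfun.
Import numFieldNormedType.Exports.
Import Order.TTheory GRing.Theory Num.Theory.
Local Open Scope classical_set_scope.
Local Open Scope ring_scope.

Section HBsec.
Variables (R : realType) (Z : normedModType R) (u : Z).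

Definition Pgr (G : set (Z * R)) :=
  [/\ G (u, `|u|),
      (forall a p q, G p -> G q -> G (a *: p.1 + q.1, a * p.2 + q.2)) &
      (forall p, G p -> p.2 <= `|p.1|)].

Lemma Pgr0 G : Pgr G -> G (0, 0).
Proof.
case=> Gu Gl _; have := Gl (-1) _ _ Gu Gu => /=.
by rewrite scaleN1r mulN1r !addNr.
Qed.

Lemma Pgr_fun G z r r' : Pgr G -> G (z, r) -> G (z, r') -> r = r'.
Proof.
move=> PG Gr Gr'; case: (PG) => _ Gl Gb.
have h1 := Gb _ (Gl (-1) _ _ Gr Gr'); have h2 := Gb _ (Gl (-1) _ _ Gr' Gr).
move: h1 h2 => /=; rewrite !scaleN1r !addNr normr0 !mulN1r => h1 h2.
lra.
Qed.

Lemma Pgr_ext G z0 : Pgr G -> (forall r, ~ G (z0, r)) ->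
  exists B, G `<` B /\ Pgr B.
Proof.
move=> PG nG; case: (PG) => Gu Gl Gb.
pose E := [set p.2 - `|p.1 - z0| | p in G].
have E0 : E !=set0 by exists (`|u| - `|u - z0|), (u, `|u|).
have Eub : forall q, G q -> ubound E (`|q.1 + z0| - q.2).
  move=> q Gq _ [p Gp <-].
  have h := Gb _ (Gl 1 _ _ Gp Gq); rewrite /= scale1r mul1r in h.
  have h2 : `|p.1 + q.1| <= `|p.1 - z0| + `|q.1 + z0|.
    by apply: le_trans (ler_normD _ _); rewrite addrACA addNr addr0.
  lra.
have hE : has_ubound E by exists (`|u + z0| - `|u|); exact: Eub _ Gu.
set c := sup E.
have c1 : forall p, G p -> p.2 - `|p.1 - z0| <= c.
  by move=> p Gp; apply: ub_le_sup => //; exists p.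
have c2 : forall p, G p -> c <= `|p.1 + z0| - p.2.
  by move=> p Gp; apply: ge_sup => //; exact: Eub.
pose B := [set q | exists p a, G p /\ q = (p.1 + a *: z0, p.2 + a * c)].
have GB : G `<=` B.
  by move=> [z r] Gp; exists (z, r), 0; rewrite scale0r mul0r !addr0.
exists B; split.
  split => // BG; apply: (nG c); apply: BG.
  by exists (0, 0), 1; split; [exact: Pgr0|rewrite /= !add0r scale1r mul1r].
split.
- exact: GB.
- move=> a _ _ [p [b [Gp ->]]] [q [b' [Gq ->]]] /=.
  exists (a *: p.1 + q.1, a * p.2 + q.2), (a * b + b'); split; first exact: Gl.
  congr (_, _) => /=.
    by rewrite scalerDr scalerA scalerDl addrACA.
  by rewrite mulrDr mulrA mulrDl addrACA.
- move=> _ [[z r] [a [Gp ->]]] /=.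
  have [->|a0] := eqVneq a 0; first by rewrite scale0r mul0r !addr0; exact: Gb Gp.
  have Gw : G (a^-1 *: z, a^-1 * r).
    by have := Gl a^-1 _ _ Gp (@Pgr0 G PG); rewrite /= !addr0.
  have e1 : z + a *: z0 = a *: (a^-1 *: z + z0).
    by rewrite scalerDr scalerA mulfV // scale1r.
  have e2 : r + a * c = a * (a^-1 * r + c) by rewrite mulrDr mulrA mulfV // mul1r.
  rewrite e1 e2 normrZ.
  have [a_pos|a_neg] := ltrP 0 a.
    rewrite gtr0_norm // ler_pM2l //; have := c2 _ Gw => /= h; lra.
  have a_lt : a < 0 by rewrite lt_neqAle a0 a_neg.
  rewrite ltr0_norm // mulNr -mulrN ler_nM2l //.
  have Gmw : G (- (a^-1 *: z), - (a^-1 * r)).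
    by have := Gl (-1) _ _ Gw (@Pgr0 G PG); rewrite /= !addr0 scaleN1r mulN1r.
  have h := c1 _ Gmw.
  have e3 : `|- (a^-1 *: z) - z0| = `|a^-1 *: z + z0| by rewrite -opprD normrN.
  rewrite /= e3 in h; lra.
Qed.

Lemma norming : exists phi : Z -> R,
  [/\ (forall a x y, phi (a *: x + y) = a * phi x + phi y),
      (forall z, phi z <= `|z|) & phi u = `|u|].
Proof.
pose P (G : set (Z * R)) := G = set0 \/ Pgr G.
have [A [PA Amax]] : exists A, P A /\ forall B, A `<` B -> ~ P B.
  apply: Zorn_bigcup => F FP Ftot.
  have [Fe|/existsNP [G0 /not_implyP [FG0 G0n]]] := pselect (forall G, F G -> G = set0).
    by left; apply/seteqP; split => // x [G FG]; rewrite (Fe G FG).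
  have PG0 : Pgr G0.
    by case: (FP _ FG0) => // e; exfalso; apply: G0n.
  right; split.
  - by exists G0 => //; case: PG0.
  - move=> a p q [G1 FG1 G1p] [G2 FG2 G2q].
    have [G3 [FG3 [s1 s2]]] : exists G3, F G3 /\ G1 `<=` G3 /\ G2 `<=` G3.
      by case: (Ftot _ _ FG1 FG2) => h; [exists G2; split => //; split|exists G1; split => //; split]...
    have PG3 : Pgr G3 by case: (FP _ FG3) => // e; move: (s1 _ G1p); rewrite e.
    by exists G3 => //; case: PG3 => _ Gl _; apply: Gl; [exact: s1|exact: s2].
  - move=> p [G1 FG1 G1p]; have : Pgr G1.
      by case: (FP _ FG1) => // e; move: G1p; rewrite e.
    by case=> _ _ Gb; exact: Gb.
have PgrA : Pgr A.
  case: PA => // A0; exfalso.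
  apply: (Amax [set p | exists a, p = (a *: u, a * `|u|)]).
    rewrite A0; split; first exact: sub0set.
    by move=> h; have := h (u, `|u|); rewrite /=; apply; exists 1; rewrite scale1r mul1r.
  right; split.
  - by exists 1; rewrite scale1r mul1r.
  - move=> a _ _ [b ->] [b' ->] /=; exists (a * b + b').
    by rewrite scalerDl scalerA mulrDl mulrA.
  - move=> _ [b ->] /=; rewrite normrZ; apply: (le_trans _ (ler_wpM2r _ (ler_norm b))) => //.
have tot : forall z, exists r, A (z, r).
  move=> z; apply/not_existsP => nA.
  have [B [AB PB]] := @Pgr_ext A z PgrA (fun r => nA r).
  exact: (Amax B AB (or_intror PB)).
pose phi z := projT1 (cid (tot z)).
have phiP z : A (z, phi z) by rewrite /phi; case: cid.
case: (PgrA) => Au Al Ab.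
exists phi; split.
- move=> a x y; apply: (@Pgr_fun A _ _ _ PgrA (phiP _)).
  exact: (Al a _ _ (phiP x) (phiP y)).
- by move=> z; exact: (Ab _ (phiP z)).
- exact: (@Pgr_fun A _ _ _ PgrA (phiP u) Au).
Qed.

End HBsec.

Section PB.
Variables (R : realType) (X Y Z : completeNormedModType R) (tp : X -> Y -> Z).
Hypothesis bil : bilinear_map tp.
Hypothesis bnd : forall x y, `|tp x y| <= `|x| * `|y|.

Lemma tp_subl x x' y : tp (x - x') y = tp x y - tp x' y.
Proof.
case: bil => h _; have := h (-1) x' x y.
by rewrite scaleN1r addrC => ->; rewrite scaleN1r addrC.
Qed.

Lemma tp_subr x y y' : tp x (y - y') = tp x y - tp x y'.
Proof.
case: bil => _ h; have := h (-1) x y' y.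
by rewrite scaleN1r addrC => ->; rewrite scaleN1r addrC.
Qed.

Lemma tp_cont : continuous (fun t : X * Y => tp t.1 t.2).
Proof.
move=> [x0 y0]; apply/cvgrPdist_lt => e e0.
set K := `|x0| + `|y0| + 2.
have K0 : 0 < K by rewrite /K; have := normr_ge0 x0; have := normr_ge0 y0; lra.
set d := Num.min 1 (e / K).
have d0 : 0 < d by rewrite /d lt_min ltr01 divr_gt0.
have d1 : d <= 1 by rewrite /d ge_min lexx.
have dK : d * K <= e.
  by rewrite /d -ler_pdivlMr // ge_min lexx orbT.
have h1 : \forall t \near (x0, y0), `|x0 - t.1| < d.
  have H : (fst : X * Y -> X) @ nbhs (x0, y0) --> x0 by apply: cvg_fst.
  exact: ((cvgrPdist_lt fst x0).1 H d d0).
have h2 : \forall t \near (x0, y0), `|y0 - t.2| < d.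
  have H : (snd : X * Y -> Y) @ nbhs (x0, y0) --> y0 by apply: cvg_snd.
  exact: ((cvgrPdist_lt snd y0).1 H d d0).
near=> t.
have a1 : `|x0 - t.1| < d by near: t.
have a2 : `|y0 - t.2| < d by near: t.
have ey : tp x0 y0 - tp t.1 t.2 = tp (x0 - t.1) t.2 + tp x0 (y0 - t.2).
  by rewrite tp_subl tp_subr [RHS]addrC addrA subrK.
rewrite /= ey; apply: (le_lt_trans (ler_normD _ _)).
have b1 := bnd (x0 - t.1) t.2; have b2 := bnd x0 (y0 - t.2).
have yb : `|t.2| <= `|y0| + d.
  have e1 : y0 - (y0 - t.2) = t.2 by rewrite opprB addrC subrK.
  have := ler_normB y0 (y0 - t.2); rewrite e1; lra.
have n1 := normr_ge0 (x0 - t.1); have n2 := normr_ge0 (y0 - t.2).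
have n3 := normr_ge0 x0; have n4 := normr_ge0 t.2; have n5 := normr_ge0 y0.
have : `|x0 - t.1| * `|t.2| <= d * (`|y0| + d).
  by apply: ler_pM => //; exact: ltW.
have : `|x0| * `|y0 - t.2| <= `|x0| * d by apply: ler_wpM2l => //; exact: ltW.
rewrite /K in dK; nra.
Unshelve. all: by end_near.
Qed.

Lemma cont_meas (h : X * Y -> R) : continuous h ->
  measurable_fun setT (h : borelXY X Y -> R).
Proof.
move=> ch; apply: (@measurability _ _ (borelXY X Y) R setT h _ (measurable_realfun.RGenOpens.measurableE R)).
move=> _ [_ [a [b ->]] <-]; rewrite setTI; apply: sub_sigma_algebra.
by apply: (proj1 (continuousP h) ch); exact: interval_open.
Qed.

End PB.

Set Implicit Arguments. Unset Strict Implicit.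

Section Sel.
Variables (R : realType) (d : measure_display) (T : measurableType d).
Variable (Z : normedModType R).
Variable mu : {measure set T -> \bar R}.
Hypothesis mufin : (mu setT < +oo)%E.
Variable f : T -> Z.
Hypothesis mf : forall w, measurable_fun setT (fun t => `|f t - w|).
Variable P : set T.
Hypothesis Pneg : mu.-negligible (~` P).

Definition seval w N (A : nat -> set T) (z : nat -> Z) t :=
  w + \sum_(k < N) (\1_(A k) t : R) *: z k.
Definition sint E w N (A : nat -> set T) (z : nat -> Z) :=
  fine (mu E) *: w + \sum_(k < N) fine (mu (E `&` A k)) *: z k.

Lemma mu_fin E : measurable E -> mu E \is a fin_num.
Proof.
move=> mE; rewrite ge0_fin_numE //.
apply: le_lt_trans mufin; apply: le_measure => //; rewrite inE //.
Qed.

Lemma muE E : measurable E -> mu E = (fine (mu E))%:E.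
Proof. by move=> mE; rewrite fineK // mu_fin. Qed.

Lemma mu_ge0 E : (0 <= fine (mu E))%R.
Proof. exact: fine_ge0. Qed.

Lemma mu_split E B : measurable E -> measurable B ->
  fine (mu (E `&` B)) + fine (mu (E `\` B)) = fine (mu E).
Proof.
move=> mE mB; rewrite (measureDI mu mE mB) fineD; first by rewrite addrC.
  exact: mu_fin (measurableD mE mB).
exact: mu_fin (measurableI _ _ mE mB).
Qed.

Lemma seval_meas N A z : (forall k, measurable (A k)) ->
  forall w, measurable_fun setT (fun t => `|f t - seval w N A z t|).
Proof.
move=> mA; elim: N => [|N IH] w.
  have -> : (fun t => `|f t - seval w 0 A z t|) = (fun t => `|f t - w|).
    by apply/funext => t; rewrite /seval big_ord0 addr0.
  exact: mf.
have -> : (fun t => `|f t - seval w N.+1 A z t|) =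
  (fun t => (\1_(A N) t : R) * `|f t - seval (w + z N) N A z t| +
            (1 - \1_(A N) t) * `|f t - seval w N A z t|).
  apply/funext => t; rewrite /seval big_ord_recr /= indicE.
  case: (boolP (t \in A N)) => _ /=.
    by rewrite scale1r mul1r subrr mul0r addr0 addrAC addrA.
  by rewrite scale0r addr0 mul0r add0r subr0 mul1r.
apply: measurable_realfun.measurable_funD; apply: measurable_realfun.measurable_funM => //.
by apply: measurable_realfun.measurable_funB => //; exact: measurable_realfun.measurable_indic.
Qed.

Let h w t := `|f t - w|.

Lemma select0 E w (eta : R) : measurable E -> 0 < eta -> 0 < fine (mu E) ->
  exists t, [/\ E t, P t &
   ((fine (mu E) * `|f t - w|)%:E <= \int[mu]_(t in E) (`|f t - w|)%:E + eta%:E)%E].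
Proof.
move=> mE eta0 muE0.
have [Nn [mN muN PN]] := Pneg.
have mED : measurable (E `\` Nn) by exact: measurableD.
have muED : fine (mu (E `\` Nn)) = fine (mu E).
  have := mu_split mE mN.
  suff -> : fine (mu (E `&` Nn)) = 0 by rewrite add0r.
  have : (mu (E `&` Nn) <= mu Nn)%E.
    by apply: le_measure => //; rewrite inE //; exact: measurableI.
  by rewrite muN (muE (measurableI _ _ mE mN)) lee_fin => h0; apply/eqP; rewrite eq_le h0 mu_ge0.
set m := fine (mu E).
have mhE : measurable_fun E (fun t => (`|f t - w|)%:E).
  apply/(@measurable_EFinP _ _ _ E (fun t => `|f t - w|)).
  exact: measurable_funS (mf w).
set I := (\int[mu]_(t in E) (`|f t - w|)%:E)%E.
apply/not_existsP => H.
have H' : forall t, E t -> ~ Nn t -> (I + eta%:E < (m * `|f t - w|)%:E)%E.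
  move=> t Et Nt; rewrite ltNge; apply/negP => hle; apply: (H t); split => //.
  by case: (pselect (P t)) => // nP; exfalso; exact: Nt (PN t nP).
have [t0 [Et0 Nt0]] : E `\` Nn !=set0.
  apply/set0P/eqP => e0; move: muED; rewrite e0 measure0 /= => e1.
  by move: muE0; rewrite /m -e1 ltxx.
have I0 : (0 <= I)%E by apply: integral_ge0.
have Ifin : I \is a fin_num.
  have hh := H' _ Et0 Nt0.
  rewrite ge0_fin_numE //; apply: (le_lt_trans _ (lt_trans hh (ltry _))).
  by rewrite leeDl // lee_fin ltW.
set r := fine I.
have Ir : I = r%:E by rewrite fineK.
have c0 : forall t, (E `\` Nn) t -> (((r + eta) / m)%:E <= (`|f t - w|)%:E)%E.
  move=> t [Et Nt]; have := H' _ Et Nt; rewrite Ir -EFinD lte_fin lee_fin => hh.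
  by rewrite ler_pdivrMr // mulrC ltW.
have i1 : (\int[mu]_(t in E `\` Nn) (cst ((r + eta) / m)%:E) t <=
           \int[mu]_(t in E `\` Nn) (`|f t - w|)%:E)%E.
  apply: ge0_le_integral => //.
  - move=> t _; rewrite lee_fin; apply: divr_ge0; last exact: mu_ge0.
    by have := fine_ge0 I0; rewrite -/r; lra.
  - by apply: measurable_funS mhE => //; exact: subDsetl.
have i2 : (\int[mu]_(t in E `\` Nn) (`|f t - w|)%:E <= I)%E.
  by apply: ge0_subset_integral => //; exact: subDsetl.
rewrite integral_cst // (muE mED) muED -/m -EFinM mulfVK ?gt_eqF // in i1.
have := le_trans i1 i2; rewrite Ir lee_fin; lra.
Qed.


Lemma sint_split E B w N A z : measurable E -> measurable B ->
  (forall k, measurable (A k)) ->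
  sint E w N A z = sint (E `&` B) w N A z + sint (E `\` B) w N A z.
Proof.
move=> mE mB mA; rewrite /sint -(mu_split mE mB) scalerDl addrACA -big_split /=.
congr (_ + _); apply: eq_bigr => k _; rewrite -scalerDl; congr (_ *: _).
have mEk : measurable (E `&` A k) by exact: measurableI.
rewrite -(mu_split mEk mB) !setDE; congr (fine (mu _) + fine (mu _)).
  by rewrite setIAC.
by rewrite setIAC.
Qed.

Lemma select N A z : (forall k, measurable (A k)) ->
  forall E w (eta : R), measurable E -> 0 < eta ->
  exists l : seq (R * T),
   [/\ (forall p, List.In p l -> 0 <= p.1 /\ E p.2 /\ P p.2),
       \sum_(p <- l) p.1 = fine (mu E) &
       ((`|\sum_(p <- l) p.1 *: f p.2 - sint E w N A z|)%:E <=
         \int[mu]_(t in E) (`|f t - seval w N A z t|)%:E + eta%:E)%E].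
Proof.
move=> mA; elim: N => [|N IH] E w eta mE eta0.
  have [m0|mpos] := eqVneq (fine (mu E)) 0.
    exists [::]; split => //; first by rewrite big_nil m0.
    rewrite big_nil /sint big_ord0 addr0 m0 scale0r subrr normr0.
    apply: adde_ge0; first by apply: integral_ge0 => t _; rewrite lee_fin.
    by rewrite lee_fin ltW.
  have mpos' : 0 < fine (mu E) by rewrite lt_neqAle eq_sym mpos mu_ge0.
  have [t [Et Pt ht]] := select0 w mE eta0 mpos'.
  exists [:: (fine (mu E), t)]; split.
  - by move=> p [<-|//]; split => //; exact: mu_ge0.
  - by rewrite big_seq1.
  - rewrite big_seq1 /sint big_ord0 addr0 /= -scalerBr normrZ ger0_norm ?mu_ge0 //.
    by under eq_integral do rewrite /seval big_ord0 addr0.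
set B := A N.
have mB : measurable B by exact: mA.
have mEB : measurable (E `&` B) by exact: measurableI.
have mEDB : measurable (E `\` B) by exact: measurableD.
have eta2 : 0 < eta / 2 by rewrite divr_gt0.
have [l1 [h1 s1 i1]] := IH (E `&` B) (w + z N) (eta / 2) mEB eta2.
have [l2 [h2 s2 i2]] := IH (E `\` B) w (eta / 2) mEDB eta2.
have sev_in t : B t -> seval w N.+1 A z t = seval (w + z N) N A z t.
  by move=> Bt; rewrite /seval big_ord_recr /= indicE mem_set // scale1r addrA addrAC.
have sev_out t : ~ B t -> seval w N.+1 A z t = seval w N A z t.
  by move=> Bt; rewrite /seval big_ord_recr /= indicE memNset // scale0r addr0.
have sintE : sint E w N.+1 A z = sint (E `&` B) (w + z N) N A z + sint (E `\` B) w N A z.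
  have e1 : sint E w N.+1 A z = sint E w N A z + fine (mu (E `&` B)) *: z N.
    by rewrite /sint big_ord_recr /= addrA.
  have e2 : sint (E `&` B) (w + z N) N A z =
      sint (E `&` B) w N A z + fine (mu (E `&` B)) *: z N.
    by rewrite /sint scalerDr addrAC.
  have e3 := sint_split w N z mE mB mA.
  by rewrite e1 e2 e3 addrAC.
have EU : E = (E `&` B) `|` (E `\` B).
  by rewrite setDE -setIUr setUCr setIT.
have intE : (\int[mu]_(t in E) (`|f t - seval w N.+1 A z t|)%:E =
    \int[mu]_(t in E `&` B) (`|f t - seval (w + z N) N A z t|)%:E +
    \int[mu]_(t in E `\` B) (`|f t - seval w N A z t|)%:E)%E.
  rewrite {1}EU ge0_integral_setU //.
  - congr (_ + _)%E; apply: eq_integral => t; rewrite inE => -[_ Bt].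
      by rewrite sev_in.
    by rewrite sev_out.
  - rewrite -EU; apply/(@measurable_EFinP _ _ _ E (fun t => `|f t - seval w N.+1 A z t|)).
    apply: (measurable_funS measurableT (subsetT _)); exact: seval_meas.
  - rewrite disj_set2E; apply/eqP/seteqP; split => // t [[_ Bt] [_ nBt]]; exact: nBt Bt.
exists (l1 ++ l2); split.
- move=> p pl0; case: (List.in_app_or l1 l2 p pl0) => pl.
    by have [p0 [[Ep _] Pp]] := h1 p pl.
  by have [p0 [[Ep _] Pp]] := h2 p pl.
- by rewrite big_cat /= s1 s2 mu_split.
rewrite big_cat /= sintE intE.
set v1 := \sum_(p <- l1) _; set v2 := \sum_(p <- l2) _.
set S1 := sint _ _ _ _ _; set S2 := sint _ _ _ _ _.
have tri : `|v1 + v2 - (S1 + S2)| <= `|v1 - S1| + `|v2 - S2|.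
  by rewrite opprD addrACA ler_normD.
have tri' : ((`|v1 + v2 - (S1 + S2)|)%:E <= (`|v1 - S1|)%:E + (`|v2 - S2|)%:E)%E.
  by rewrite -EFinD lee_fin.
apply: le_trans tri' _; apply: le_trans (leeD i1 i2) _.
by rewrite addeACA -EFinD -splitr.
Qed.

End Sel.


Lemma sum_le_In (R : realType) (T : Type) (l : seq (R * T)) (F G : R * T -> R) :
  (forall p, List.In p l -> F p <= G p) ->
  \sum_(p <- l) F p <= \sum_(p <- l) G p.
Proof.
elim: l => [|p l IH] h; first by rewrite !big_nil.
rewrite !big_cons; apply: lerD; first by apply: h; left.
by apply: IH => q ql; apply: h; right.
Qed.

Lemma sum_eq_In (R : realType) (T : Type) (l : seq (R * T)) (F G : R * T -> R) :
  (forall p, List.In p l -> F p = G p) ->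
  \sum_(p <- l) F p = \sum_(p <- l) G p.
Proof.
elim: l => [|p l IH] h; first by rewrite !big_nil.
rewrite !big_cons (h p (or_introl erefl)) IH // => q ql; apply: h; by right.
Qed.

Section Main.
Variables (R : realType) (X Y Z : completeNormedModType R) (tp : X -> Y -> Z).
Hypothesis bil : bilinear_map tp.
Hypothesis bnd : forall x y, `|tp x y| <= `|x| * `|y|.
Local Notation T := (borelXY X Y).
Let f (t : T) : Z := tp t.1 t.2.

Variable u : Z.
Variable mu : {measure set T -> \bar R}.
Hypothesis mufin : (mu setT < +oo)%E.
Let S := [set t : T | `|t.1| <= 1 /\ `|t.2| <= 1].
Hypothesis mu0 : mu (~` S) = 0.
Variables (Nb : nat -> nat) (Ab : nat -> nat -> set T) (zb : nat -> nat -> Z).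
Hypothesis mA : forall n k, measurable (Ab n k).
Hypothesis cv1 : (fun n => (\int[mu]_t (`|f t - simple_eval (Nb n) (Ab n) (zb n) t|)%:E)%E)
   @ \oo --> 0%E.
Hypothesis cv2 : (fun n => simple_int mu (Nb n) (Ab n) (zb n)) @ \oo --> u.
Hypothesis muT : mu setT = (`|u|)%:E.
Variable phi : Z -> R.
Hypothesis phil : forall a x y, phi (a *: x + y) = a * phi x + phi y.
Hypothesis phib : forall z, phi z <= `|z|.
Hypothesis phiu : phi u = `|u|.
Let g t := phi (f t).

Lemma tp0l b : tp 0 b = 0.
Proof. by have := @tp_subl R X Y Z tp bil 0 0 b; rewrite !subrr. Qed.

Lemma tpZl c a b : tp (c *: a) b = c *: tp a b.
Proof. by case: bil => h _; have := h c a 0 b; rewrite !addr0 tp0l addr0. Qed.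

Lemma phi0 : phi 0 = 0.
Proof. by have := phil 1 0 0; rewrite scale1r addr0 mul1r => /eqP; rewrite addrC -subr_eq subrr => /eqP <-. Qed.

Lemma phiD x y : phi (x + y) = phi x + phi y.
Proof. by have := phil 1 x y; rewrite scale1r mul1r. Qed.

Lemma phiZ c x : phi (c *: x) = c * phi x.
Proof. by have := phil c x 0; rewrite !addr0 phi0 addr0. Qed.

Lemma phiB x y : phi (x - y) = phi x - phi y.
Proof. by rewrite -scaleN1r phiD phiZ mulN1r. Qed.

Lemma phi_cont : continuous phi.
Proof.
move=> z; apply/cvgrPdist_lt => e e0.
have : nbhs z (ball z e) by apply: nbhsx_ballx.
apply: filterS => y; rewrite -ball_normE /ball_ /= => hy; apply: le_lt_trans hy.
rewrite -phiB ler_norml phib andbT phiB.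
have := phib (y - z); rewrite phiB -normrN opprB; lra.
Qed.

Lemma phi_sum (l : seq (R * T)) :
  phi (\sum_(p <- l) p.1 *: f p.2) = \sum_(p <- l) p.1 * g p.2.
Proof.
elim: l => [|p l IH]; first by rewrite !big_nil phi0.
by rewrite !big_cons phiD phiZ IH.
Qed.

Lemma g_le1 t : S t -> g t <= 1.
Proof.
move=> [h1 h2]; apply: (le_trans (phib _)); apply: (le_trans (bnd _ _)).
by apply: mulr_ile1.
Qed.

Lemma norm_sum_le (l : seq (R * T)) :
  `|\sum_(p <- l) p.1 *: f p.2| <= \sum_(p <- l) `|p.1 *: p.2.1| * `|p.2.2|.
Proof.
elim: l => [|p l IH]; first by rewrite !big_nil normr0.
rewrite !big_cons; apply: le_trans (ler_normD _ _) _; apply: lerD => //.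
by rewrite /f -tpZl; exact: bnd.
Qed.

Lemma mf w : measurable_fun setT (fun t : T => `|f t - w|).
Proof.
apply: (@cont_meas R X Y (fun t => `|tp t.1 t.2 - w|)) => t.
apply: cvg_norm; apply: cvgB; last exact: cvg_cst.
exact: tp_cont.
Qed.

Lemma mg : measurable_fun setT g.
Proof.
apply: (@cont_meas R X Y (fun t => phi (tp t.1 t.2))) => t.
apply: continuous_comp; first exact: tp_cont.
exact: phi_cont.
Qed.

Lemma meas_le (h : T -> R) c : measurable_fun setT h ->
  measurable [set t : T | h t <= c].
Proof.
move=> mh; have := mh measurableT _ (@measurable_itv R `]-oo, c]); rewrite setTI.
congr measurable; apply/seteqP; split => t /=; rewrite in_itv //=.
Qed.

Lemma mS : measurable S.
Proof.
rewrite /S (_ : [set t : T | _] = [set t : T | `|t.1| <= 1] `&` [set t : T | `|t.2| <= 1]) //.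
apply: measurableI; apply: meas_le.
  apply: (@cont_meas R X Y (fun t => `|t.1|)) => t.
  by apply: cvg_norm; exact: cvg_fst.
apply: (@cont_meas R X Y (fun t => `|t.2|)) => t.
by apply: cvg_norm; exact: cvg_snd.
Qed.

Let Bd (dl : R) := S `&` [set t : T | g t <= 1 - dl].

Lemma mBd dl : measurable (Bd dl).
Proof. by apply: measurableI; [exact: mS| exact: meas_le mg]. Qed.

Lemma approx eps : 0 < eps -> exists n,
  (\int[mu]_t (`|f t - simple_eval (Nb n) (Ab n) (zb n) t|)%:E < eps%:E)%E /\
  `|u - simple_int mu (Nb n) (Ab n) (zb n)| < eps.
Proof.
move=> e0.
have h1 : \forall n \near \oo,
    (\int[mu]_t (`|f t - simple_eval (Nb n) (Ab n) (zb n) t|)%:E < eps%:E)%E.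
  have hP : nbhs (0%:E : \bar R) [set y : \bar R | (y < eps%:E)%E].
    change (nbhs (0:R) (fun r : R => (r%:E < eps%:E)%E)).
    by apply: filterS (nbhs0_lt e0) => r h; rewrite lte_fin; exact: le_lt_trans (ler_norm r) h.
  exact: (cv1 hP).
have h2 : \forall n \near \oo, `|u - simple_int mu (Nb n) (Ab n) (zb n)| < eps.
  by move/cvgrPdist_lt : cv2; apply.
by have [n [hn1 hn2]] := filter_ex (filterI h1 h2); exists n.
Qed.


Lemma PnegS : mu.-negligible (~` S).
Proof. by exists (~` S); split => //; exact: measurableC mS. Qed.

Lemma int_split N (A : nat -> set T) (z : nat -> Z) (B : set T) : measurable B -> (forall k, measurable (A k)) ->
  (\int[mu]_(t in B) (`|f t - seval 0 N A z t|)%:E +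
   \int[mu]_(t in ~` B) (`|f t - seval 0 N A z t|)%:E
   = \int[mu]_t (`|f t - simple_eval N A z t|)%:E)%E.
Proof.
move=> mB mA'; rewrite -ge0_integral_setU //.
- by rewrite setUCr; apply: eq_integral => t _; rewrite /seval add0r.
- by apply: measurableC.
- rewrite setUCr; apply/(@measurable_EFinP _ _ _ setT (fun t => `|f t - seval 0 N A z t|)).
  exact: (seval_meas mf N z mA' 0).
- by rewrite disj_set2E setICr.
Qed.

Lemma sint_T N (A : nat -> set T) (z : nat -> Z) : sint mu setT 0 N A z = simple_int mu N A z.
Proof. by rewrite /sint /simple_int scaler0 add0r; apply: eq_bigr => k _; rewrite setTI. Qed.

Lemma nullB dl : 0 < dl -> mu (Bd dl) = 0.
Proof.
move=> d0; have mB := mBd dl; set B := Bd dl in mB *.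
set beta := fine (mu B).
have b0 : 0 <= beta by apply: fine_ge0; exact: measure_ge0.
suff hb : dl * beta <= 0.
  rewrite (muE mufin mB) -/beta; congr (_%:E); apply/eqP; rewrite eq_le b0 andbT.
  by rewrite -(pmulr_rle0 _ d0).
rewrite leNgt; apply/negP => hpos.
set q := dl * beta in hpos *.
set eps := q / 5.
have e0 : 0 < eps by rewrite divr_gt0.
have [n [hn1 hn2]] := approx e0.
have [l1 [h1 s1 i1]] := select mufin mf PnegS (Nb n) (zb n) (mA n) 0 mB e0.
have [l2 [h2 s2 i2]] := select mufin mf PnegS (Nb n) (zb n) (mA n) 0 (measurableC mB) e0.
have ii := int_split (Nb n) (zb n) mB (mA n).
set I := (\int[mu]_t _)%E in hn1 ii.
set v1 := \sum_(p <- l1) _ in i1 *; set v2 := \sum_(p <- l2) _ in i2 *.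
set S1 := sint _ _ _ _ _ _ in i1; set S2 := sint _ _ _ _ _ _ in i2.
set s := simple_int _ _ _ _ in hn2.
have ssum : S1 + S2 = s.
  by rewrite /S1 /S2 /s -sint_T (sint_split mufin 0 (Nb n) (zb n) measurableT mB (mA n)) setTI setTD.
have a12 : `|v1 - S1| + `|v2 - S2| < eps + (eps + eps).
  have : ((`|v1 - S1| + `|v2 - S2|)%:E < (eps + (eps + eps))%:E)%E.
    rewrite EFinD; apply: le_lt_trans (leeD i1 i2) _.
    by rewrite addeACA ii EFinD lteD2rE.
  by rewrite lte_fin.
have tri : `|s - (v1 + v2)| <= `|v1 - S1| + `|v2 - S2|.
  by rewrite -ssum distrC opprD addrACA ler_normD.
have uv : `|u - (v1 + v2)| <= `|u - s| + `|s - (v1 + v2)| by exact: ler_distD.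
have phv : phi (v1 + v2) <= (1 - dl) * beta + fine (mu (~` B)).
  rewrite phiD !phi_sum; apply: lerD.
    rewrite /beta -s1 mulr_sumr; apply: sum_le_In => p /h1 [c0 [[_ Bp] _]].
    by rewrite [leRHS]mulrC; apply: ler_wpM2l.
  rewrite -s2; apply: sum_le_In => p /h2 [c0 [_ Sp]].
  by rewrite -[leRHS]mulr1; apply: ler_wpM2l => //; exact: g_le1.
have phu : phi u - `|u - (v1 + v2)| <= phi (v1 + v2).
  by have := phib (u - (v1 + v2)); rewrite phiB; lra.
have tot : phi u = beta + fine (mu (~` B)).
  by rewrite phiu; have := mu_split mufin measurableT mB; rewrite setTI setTD muT /= => <-.
rewrite mulrBl mul1r -/q in phv.
have : eps = q / 5 by [].
lra.
Qed.

Lemma goodP : mu.-negligible (~` [set t : T | S t /\ g t = 1]).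
Proof.
have sub : ~` [set t : T | S t /\ g t = 1] `<=` (~` S `|` \bigcup_m Bd (m.+1%:R^-1)).
  move=> t /= nt; case: (pselect (S t)) => St; last by left.
  right; have gle := g_le1 St.
  have glt : g t < 1 by rewrite lt_neqAle gle andbT; apply/eqP => e; apply: nt; split.
  set x := 1 - g t; have x0 : 0 < x by rewrite subr_gt0.
  exists (Num.truncn x^-1) => //; split => //=.
  have hK := truncnS_gt (x^-1); set K := (Num.truncn x^-1).+1%:R in hK *.
  have K0 : 0 < K by apply: lt_trans hK; rewrite invr_gt0.
  rewrite -(ltr_pM2r x0) mulVf ?gt_eqF // in hK.
  have : K^-1 < x by rewrite -(ltr_pM2l K0) mulfV ?gt_eqF.
  move=> h; rewrite /x in h; clearbody K; lra.
apply: negligibleS sub _; apply: negligibleU.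
  by exists (~` S); split => //; exact: measurableC mS.
apply: negligible_bigcup => m; exists (Bd m.+1%:R^-1); split => //.
  exact: mBd.
by apply: nullB; rewrite invr_gt0 ltr0Sn.
Qed.

Lemma fna_v (l : seq (R * T)) :
  (forall p, List.In p l -> 0 <= p.1 /\ S p.2 /\ g p.2 = 1) ->
  FNA tp (\sum_(p <- l) p.1 *: f p.2).
Proof.
move=> hl; set v := \sum_(p <- l) _.
have e1 : \sum_(p <- l) `|p.1 *: p.2.1| * `|p.2.2| <= \sum_(p <- l) p.1.
  apply: sum_le_In => p /hl [c0 [[n1 n2] _]].
  rewrite normrZ ger0_norm // -mulrA; apply: ler_piMr => //.
  exact: mulr_ile1.
have e2 : phi v = \sum_(p <- l) p.1.
  by rewrite phi_sum; apply: sum_eq_In => p /hl [_ [_ ->]]; rewrite mulr1.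
have e3 := norm_sum_le l.
have eq : \sum_(p <- l) `|p.1 *: p.2.1| * `|p.2.2| = `|v|.
  apply/eqP; rewrite eq_le e3 andbT; apply: le_trans e1 _; rewrite -e2; exact: phib.
pose p0 : R * T := (0, (0, 0)).
exists (size l), (fun k => (nth p0 l k).1 *: (nth p0 l k).2.1), (fun k => (nth p0 l k).2.2); split.
  by rewrite /v (big_nth p0) big_mkord; apply: eq_bigr => k _; rewrite tpZl.
by rewrite -eq (big_nth p0) big_mkord.
Qed.

Lemma final : closure (FNA tp) u.
Proof.
move=> Bn /nbhs_ballP [e e0 sub].
set eps := e / 3.
have e0' : 0 < eps by rewrite divr_gt0.
have [n [hn1 hn2]] := approx e0'.
have [l [hl sl il]] := select mufin mf goodP (Nb n) (zb n) (mA n) 0 measurableT e0'.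
exists (\sum_(p <- l) p.1 *: f p.2); split.
  by apply: fna_v => p /hl [c0 [_ [Sp gp]]].
apply: sub; rewrite -ball_normE /ball_ /=.
set v := \sum_(p <- l) _ in il *.
set s := simple_int _ _ _ _ in hn2.
rewrite sint_T -/s in il.
have iT : (\int[mu]_(t in setT) (`|f t - seval 0 (Nb n) (Ab n) (zb n) t|)%:E =
    \int[mu]_t (`|f t - simple_eval (Nb n) (Ab n) (zb n) t|)%:E)%E.
  by apply: eq_integral => t _; rewrite /seval add0r.
rewrite iT in il.
have vs : `|v - s| < eps + eps.
  have : ((`|v - s|)%:E < (eps + eps)%:E)%E.
    by apply: le_lt_trans il _; rewrite EFinD lteD2rE.
  by rewrite lte_fin.
have : `|u - v| <= `|u - s| + `|s - v|.
  by apply: le_trans (ler_normD _ _); rewrite addrA subrK.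
rewrite (distrC s v).
have : e = eps + (eps + eps) by rewrite /eps; lra.
lra.
Qed.

End Main.

Unset Implicit Arguments.

Theorem theorem2p11 (R : realType) (X Y Z : completeNormedModType R)
    (tp : X -> Y -> Z) :
  is_projective_tensor_product tp ->
  INA tp `<=` closure (FNA tp).
Proof.
move=> [bil bnd _ _] u [mu [mufin mu0 [_ [Nb [Ab [zb [mA cv1 cv2]]]]] muT]].
have [phi [phil phib phiu]] := @norming R Z u.
exact: (final bil bnd mufin mu0 mA cv1 cv2 muT phil phib phiu).
Qed.
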